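(* Let $R=(r_n)_{n\in\mathbb{N}}$ be an enumerated countably infinite reference set with magnum $\theta_R\in\mathbf{Nn}$, and let $A,B$ be infinite subsets of $R$ with the orderings inherited from $R$. Then $m(B\mid A)=m(A\mid B)$.
   Context: $\mathbb{N}=\{1,2,3,\dots\}$, $\mathbb{N}_0=\mathbb{N}\cup\{0\}$. $\mathbf{No}$ denotes Conway's ordered field of surreal numbers, $\omega$ its first infinite element. An omnific integer is a surreal $x$ with $x=\{x-1\mid x+1\}$; $\mathbf{Nn}$ (surnatural numbers) is the class of nonnegative omnific integers. For $f,g:\mathbb{N}\to\mathbb{N}_0$, $f\overset{\to}{=}g$ means $f(n)=g(n)$ for all $n\ge N$ for some $N$; $f\overset{\to}{<}g$ means $f(n)<g(n)$ for all $n\ge N$ for some $N$. Axiom of Extension (standing assumption): every nondecreasing $f:\mathbb{N}\to\mathbb{N}_0$ has an extension $\hat f:\mathbf{Nn}\to\mathbf{Nn}$ with $\hat f(n)=f(n)$ for $n\in\mathbb{N}$, such that for nondecreasing $f,g$: $f\overset{\to}{=}g\Rightarrow\hat f(\nu)=\hat g(\nu)$ for all $\nu\in\mathbf{Nn}\setminus\mathbb{N}$; $f\overset{\to}{<}g\Rightarrow\hat f(\nu)<\hat g(\nu)$ for all $\nu\in\mathbf{Nn}\setminus\mathbb{N}$; and $\widehat{f+g}=\hat f+\hat g$, $\widehat{f\cdot g}=\hat f\cdot\hat g$, $\widehat{f\circ g}=\hat f\circ\hat g$ where defined. Relative counting: if $S=(s_n)_{n\in\mathbb{N}}$ is an infinite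 enumerated set and $T$ any set, $\chi_{T|S}(n)=1$ if $s_n\in T$ and $0$ otherwise, and $\kappa_{T|S}(n)=\sum_{k=1}^n\chi_{T|S}(k)$. Subsets of $R$ are enumerated in the order inherited from $R$. Set $\theta_A:=\hat{\kappa_{A|R}}(\theta_R)$ and $\theta_B:=\hat{\kappa_{B|R}}(\theta_R)$ (the magnums of $A$, $B$). The magnum of $B$ in $A$ is $m(B\mid A):=\hat{\kappa_{B|A}}(\theta_A)$, and $m(A\mid B):=\hat{\kappa_{A|B}}(\theta_B)$. *)

(* Defs.v *)
From Stdlib Require Import ClassicalEpsilon List.
From mathcomp Require Import all_boot.

Set Implicit Arguments.
Unset Strict Implicit.
Unset Printing Implicit Defensive.

(* Conventions: sequences indexed by N = {1,2,...} are modelled as functions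
   [nat -> _]; the value at index 0 is junk and never used. *)

Definition chi {T : Type} (s : nat -> T) (X : pred T) (k : nat) : nat :=
  nat_of_bool (X (s k)).

Definition kappa {T : Type} (s : nat -> T) (X : pred T) (n : nat) : nat :=
  \sum_(1 <= k < n.+1) chi s X k.

Definition enumerated {T : Type} (r : nat -> T) : Prop :=
  forall m n, 1 <= m -> 1 <= n -> r m = r n -> m = n.

Definition subset_of {T : Type} (r : nat -> T) (A : pred T) : Prop :=
  forall x, A x -> exists n, 1 <= n /\ r n = x.

Definition infinite_set {T : Type} (A : pred T) : Prop :=
  forall s : list T, exists x, A x /\ ~ List.In x s.

(* Index in R of the n-th element of A (order inherited from R):
   the unique k >= 1 with r_k in A and kappa_{A|R}(k) = n. *)
Definition sub_index {T : Type} (r : nat -> T) (A : pred T) (n : nat) : nat :=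
  epsilon (inhabits 0%N) (fun k => 1 <= k /\ A (r k) /\ kappa r A k = n).

Definition sub_enum {T : Type} (r : nat -> T) (A : pred T) : nat -> T :=
  fun n => r (sub_index r A n).

Definition nondecr (f : nat -> nat) : Prop :=
  forall m n, 1 <= m -> m <= n -> f m <= f n.

Definition ev_eq (f g : nat -> nat) : Prop :=
  exists N, forall n, N <= n -> f n = g n.

Definition ev_lt (f g : nat -> nat) : Prop :=
  exists N, forall n, N <= n -> f n < g n.

(* [ExtensionAxiom inj lt add mul hat]: [Nn] is the class of surnatural
   numbers, [inj : nat -> Nn] the canonical embedding of N_0, [lt], [add],
   [mul] the order and operations of Nn, and [hat f] the extension of a
   nondecreasing f : N -> N_0 to Nn -> Nn, as in the Axiom of Extension. *)
Definition not_finite {Nn : Type} (inj : nat -> Nn) (nu : Nn) : Prop :=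
  forall n, 1 <= n -> nu <> inj n.

Definition ExtensionAxiom {Nn : Type} (inj : nat -> Nn) (lt : Nn -> Nn -> Prop)
  (add mul : Nn -> Nn -> Nn) (hat : (nat -> nat) -> Nn -> Nn) : Prop :=
  (forall f, nondecr f -> forall n, 1 <= n -> hat f (inj n) = inj (f n)) /\
      (forall f g, nondecr f -> nondecr g -> ev_eq f g ->
         forall nu, not_finite inj nu -> hat f nu = hat g nu) /\
      (forall f g, nondecr f -> nondecr g -> ev_lt f g ->
         forall nu, not_finite inj nu -> lt (hat f nu) (hat g nu)) /\
      (forall f g, nondecr f -> nondecr g ->
         forall nu, hat (fun n => f n + g n) nu = add (hat f nu) (hat g nu)) /\
      (forall f g, nondecr f -> nondecr g ->
         forall nu, hat (fun n => f n * g n) nu = mul (hat f nu) (hat g nu)) /\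
      (* composition, where defined: g maps N into N *)
      (forall f g, nondecr f -> nondecr g -> (forall n, 1 <= n -> 1 <= g n) ->
         forall nu, hat (fun n => f (g n)) nu = hat f (hat g nu)).

Definition magnum {T Nn : Type} (hat : (nat -> nat) -> Nn -> Nn)
  (r : nat -> T) (thetaR : Nn) (A : pred T) : Nn :=
  hat (kappa r A) thetaR.

Definition magnum_in {T Nn : Type} (hat : (nat -> nat) -> Nn -> Nn)
  (r : nat -> T) (thetaR : Nn) (B A : pred T) : Nn :=
  hat (kappa (sub_enum r A) B) (magnum hat r thetaR A).

(* Main.v *)
Require Import Defs.
From Stdlib Require Import ClassicalEpsilon.
From mathcomp Require Import all_boot.

Lemma kappa0 T (s : nat -> T) (X : pred T) : kappa s X 0 = 0.
Proof. by rewrite /kappa big_geq. Qed.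

Lemma kappaS T (s : nat -> T) (X : pred T) n : kappa s X n.+1 = kappa s X n + chi s X n.+1.
Proof. by rewrite /kappa big_nat_recr. Qed.

Lemma kappa_mono T (s : nat -> T) (X : pred T) m n : m <= n -> kappa s X m <= kappa s X n.
Proof.
elim: n => [|n IH]; first by rewrite leqn0 => /eqP ->.
rewrite leq_eqVlt => /orP [/eqP -> //|]; rewrite ltnS => /IH H.
rewrite kappaS; exact: leq_trans H (leq_addr _ _).
Qed.

Lemma kappa_in T (s : nat -> T) (X : pred T) k : X (s k.+1) -> kappa s X k.+1 = (kappa s X k).+1.
Proof. by move=> H; rewrite kappaS /chi H addn1. Qed.

Lemma sub_index_spec T (r : nat -> T) (A : pred T) k : 1 <= k -> A (r k) ->
  sub_index r A (kappa r A k) = k.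
Proof.
move=> k1 Ak; rewrite /sub_index.
set P := fun k0 => _.
have : P (epsilon (inhabits 0) P) by apply: epsilon_spec; exists k.
move: (epsilon _ _) => k' [k'1 [Ak' E]].
have key : forall a b, 1 <= b -> A (r b) -> a < b -> kappa r A a < kappa r A b.
  move=> a b; case: b => // b _ Ab ab; rewrite kappa_in // ltnS.
  by apply: kappa_mono; rewrite -ltnS.
case: (ltngtP k k') => // H.
- by have := key _ _ k'1 Ak' H; rewrite E ltnn.
- by have := key _ _ k1 Ak H; rewrite E ltnn.
Qed.

Lemma comp_kappa T (r : nat -> T) (A B : pred T) n :
  kappa (sub_enum r A) B (kappa r A n) = kappa r (fun x => A x && B x) n.
Proof.
elim: n => [|n IH]; first by rewrite !kappa0.
rewrite (@kappaS _ r (fun x => A x && B x)) /chi.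
case Ar: (A (r n.+1)) => /=.
  have KA := @kappa_in _ r A n Ar.
  rewrite KA kappaS IH /chi /sub_enum -KA sub_index_spec //.
- by rewrite kappaS /chi Ar /= !addn0.
Qed.

Lemma kappa_nondecr T (s : nat -> T) (X : pred T) : nondecr (kappa s X).
Proof. by move=> m n _ H; apply: kappa_mono. Qed.

Lemma side T (r : nat -> T) (A B : pred T) (Nn : Type) (inj : nat -> Nn) lt add mul
  (hat : (nat -> nat) -> Nn -> Nn) thetaR :
  ExtensionAxiom inj lt add mul hat -> not_finite inj thetaR ->
  subset_of r A -> infinite_set A ->
  magnum_in hat r thetaR B A = hat (kappa r (fun x => A x && B x)) thetaR.
Proof.
move=> [_ [Hev [_ [_ [_ Hcomp]]]]] nf sub inf.
have [x [Ax _]] := inf nil.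
have [N [N1 rN]] := sub x Ax.
have KN : 1 <= kappa r A N.
  case: N N1 rN => // N _ rN; by rewrite kappa_in // rN.
set g := fun n => maxn 1 (kappa r A n).
have gnd : nondecr g.
  move=> m n _ mn; rewrite /g geq_max leq_maxl /=.
  apply: (leq_trans (@kappa_mono _ r A _ _ mn)); exact: leq_maxr.
have evg : forall n, N <= n -> g n = kappa r A n.
  move=> n HNn; rewrite /g; apply/maxn_idPr.
  exact: leq_trans KN (@kappa_mono _ r A _ _ HNn).
rewrite /magnum_in /magnum.
rewrite -(Hev g (kappa r A) gnd (@kappa_nondecr _ _ _)) //; last by exists N.
rewrite -Hcomp //; last by move=> n _; apply: leq_maxl.
- apply: Hev => //.
  + move=> m n m1 mn; apply: kappa_mono; exact: gnd.
  + exact: kappa_nondecr.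
  + by exists N => n HNn; rewrite evg // comp_kappa.
- exact: kappa_nondecr.
Qed.

Theorem theorem7p2 (T : Type) (r : nat -> T) (A B : pred T)
  (Nn : Type) (inj : nat -> Nn) (lt : Nn -> Nn -> Prop) (add mul : Nn -> Nn -> Nn)
  (hat : (nat -> nat) -> Nn -> Nn) (thetaR : Nn) :
  ExtensionAxiom inj lt add mul hat ->
  enumerated r ->
  not_finite inj thetaR ->
  subset_of r A -> subset_of r B ->
  infinite_set A -> infinite_set B ->
  magnum_in hat r thetaR B A = magnum_in hat r thetaR A B.
Proof.
move=> HE _ nf sA sB iA iB.
rewrite (@side _ r A B _ _ _ _ _ _ _ HE nf sA iA) (@side _ r B A _ _ _ _ _ _ _ HE nf sB iB).
case: HE => _ [Hev _]; apply: Hev => //.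
- exact: kappa_nondecr.
- exact: kappa_nondecr.
- exists 0 => n _; apply: eq_bigr => k _; by rewrite /chi andbC.
Qed.
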